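(* Let $L$ be a linear forest with $k$ vertices. Let $G$ and $G'$ be graphs, each of which is a disjoint union of paths each having at least $k-1$ vertices, such that $|V(G)|=|V(G')|$ and $|E(G)|=|E(G')|$. Then $s(G,L)=s(G',L)$; that is, the number of induced copies of $L$ in such a graph depends only on $L$, the number of vertices, and the number of edges.
   Context: A linear forest is a disjoint union of paths. For graphs $G$ and $H$, $s(G,H)$ is the number of vertex subsets $X\subseteq V(G)$ such that the induced subgraph $G[X]$ is isomorphic to $H$. *)

(* Defs.v *)
From mathcomp Require Import all_boot.
Set Implicit Arguments. Unset Strict Implicit. Unset Printing Implicit Defensive.

Definition simple_graph (T : finType) (e : rel T) : Prop :=
  symmetric e /\ irreflexive e.

Definition isomorphic (T1 T2 : finType) (e1 : rel T1) (e2 : rel T2) : bool :=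
  [exists f : {ffun T1 -> T2},
    [&& injectiveb f, [forall y, exists x, f x == y]
      & [forall x, forall y, e1 x y == e2 (f x) (f y)]]].

Definition induced_rel (T : finType) (e : rel T) (X : {set T}) :
  rel {x : T | x \in X} := fun x y => e (val x) (val y).
Arguments induced_rel {T} e X.

Definition s_count (T : finType) (e : rel T) (TH : finType) (eH : rel TH) : nat :=
  #|[set X : {set T} | isomorphic (induced_rel e X) eH]|.

Definition path_rel (n : nat) : rel 'I_n :=
  fun i j => (i.+1 == j :> nat) || (j.+1 == i :> nat).

Definition nedges (T : finType) (e : rel T) : nat :=
  #|[set A : {set T} | [exists x, exists y, (A == [set x; y]) && e x y]]|.

Definition disjoint_union_of_paths_min (m : nat) (T : finType) (e : rel T) : Prop :=
  simple_graph e /\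
  exists P : {set {set T}},
    [/\ partition P [set: T],
        (forall A, A \in P -> m <= #|A| /\ isomorphic (induced_rel e A) (@path_rel #|A|))
      & (forall x y, e x y -> pblock P x = pblock P y)].

Definition linear_forest (T : finType) (e : rel T) : Prop :=
  disjoint_union_of_paths_min 1 e.

(* Main.v *)
From mathcomp Require Import all_boot.
Require Import Defs.
From mathcomp Require Import zify.
From Stdlib Require Import Lia.
Set Implicit Arguments. Unset Strict Implicit. Unset Printing Implicit Defensive.

Section Adj.
Variable T : eqType.

Definition edge2 (a b x y : T) := ((x == a) && (y == b)) || ((x == b) && (y == a)).

Fixpoint adjp (s : seq T) (x y : T) : bool :=
  match s with
  | a :: s' => match s' with
               | b :: _ => edge2 a b x y || adjp s' x y
               | [::] => false
               end
  | [::] => false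
  end.

Lemma adjp_cons2 a b s x y : adjp [:: a, b & s] x y = edge2 a b x y || adjp (b :: s) x y.
Proof. by []. Qed.

Lemma adjp_mem s x y : adjp s x y -> (x \in s) && (y \in s).
Proof.
elim: s => [|a s IH] //.
case: s IH => [|b s] IH //.
move=> /orP[|/IH/andP[xs ys]]; last by rewrite in_cons xs in_cons ys !orbT.
by rewrite /edge2 !inE => /orP[]/andP[/eqP-> /eqP->]; rewrite !eqxx ?orbT.
Qed.

Lemma edge2C a b x y : edge2 a b x y = edge2 a b y x.
Proof. by rewrite /edge2 orbC andbC [(y == b) && _]andbC. Qed.

Lemma adjpC s x y : adjp s x y = adjp s y x.
Proof.
elim: s => [|a s IH] //; case: s IH => [|b s] IH //.
by rewrite !adjp_cons2 IH edge2C.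
Qed.

Lemma adjp_nmem s x y : x \notin s -> adjp s x y = false.
Proof. by move=> xs; apply/negbTE; apply: contra xs => /adjp_mem/andP[]. Qed.

Lemma adjp_nmem2 s x y : y \notin s -> adjp s x y = false.
Proof. by move=> ys; rewrite adjpC adjp_nmem. Qed.

Lemma adjp_catr s1 s2 x y : x \notin s1 -> y \notin s1 -> adjp (s1 ++ s2) x y = adjp s2 x y.
Proof.
elim: s1 => [|a s1 IH] //; rewrite !inE !negb_or => /andP[xa xs] /andP[ya ys].
rewrite -IH // cat_cons; case: (s1 ++ s2) => [|b t] //.
by rewrite adjp_cons2 /edge2 (negbTE xa) (negbTE ya) /= andbF.
Qed.

Lemma adjp_catl s1 s2 x y : x \notin s2 -> y \notin s2 -> adjp (s1 ++ s2) x y = adjp s1 x y.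
Proof.
move=> xs ys; elim: s1 => [|a s1 IH]; first by rewrite adjp_nmem.
case: s1 IH => [|b s1] IH; last by rewrite !cat_cons adjp_cons2 -cat_cons IH.
case: s2 xs ys {IH} => [|c s2] // xs ys.
rewrite cat_cons cat0s adjp_cons2 adjp_nmem // orbF /edge2.
move: xs ys; rewrite !inE !negb_or => /andP[/negbTE-> _] /andP[/negbTE-> _].
by rewrite !andbF.
Qed.

Lemma adjp_split s1 z s2 x y :
  adjp (s1 ++ z :: s2) x y = adjp (rcons s1 z) x y || adjp (z :: s2) x y.
Proof.
elim: s1 => [|a s1 IH] //.
case: s1 IH => [|b s1] IH; first by rewrite /= orbF.
rewrite 2!cat_cons adjp_cons2 -cat_cons IH.
by rewrite !rcons_cons adjp_cons2 -rcons_cons orbA.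
Qed.

Lemma adjp_gap s1 z s2 x y : uniq (s1 ++ z :: s2) -> x \in s1 -> y \in s2 ->
  adjp (s1 ++ z :: s2) x y = false.
Proof.
rewrite cat_uniq => /and3P[_ dis /andP[zn _]] xs ys.
have xn : x \notin z :: s2 by apply: contraNN dis => xz; apply/hasP; exists x.
have yn : y \notin rcons s1 z.
  rewrite -cats1 mem_cat negb_or; apply/andP; split.
    by apply: contraNN dis => ys1; apply/hasP; exists y => //; rewrite inE ys orbT.
  by rewrite inE; apply: contraNneq zn => <-.
by rewrite adjp_split (adjp_nmem2 _ yn) (adjp_nmem _ xn).
Qed.

End Adj.

Lemma adjp_map (T T' : eqType) (f : T -> T') s x y : {in s &, injective f} ->
  x \in s -> y \in s -> adjp (map f s) (f x) (f y) = adjp s x y.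
Proof.
elim: s => [|a s IH] // finj xs ys.
case: s IH finj xs ys => [|b s] IH finj xs ys //.
have finj' : {in b :: s &, injective f}.
  by move=> u v us vs; apply: finj; rewrite in_cons ?us ?vs orbT.
rewrite map_cons [map f (b :: s)]/= adjp_cons2 -map_cons adjp_cons2.
have E : forall u v, u \in [:: a, b & s] -> v \in [:: a, b & s] -> (f u == f v) = (u == v).
  by move=> u v us vs; apply/eqP/eqP => [/finj|->]; [apply|].
have ain : a \in [:: a, b & s] by rewrite inE eqxx.
have bin : b \in [:: a, b & s] by rewrite !inE eqxx orbT.
rewrite /edge2 !E //; congr (_ || _).
have [xbs|xnbs] := boolP (x \in b :: s); last first.
  rewrite !adjp_nmem //; apply: contra xnbs => /mapP[u us /esym fu].
  by rewrite -(finj _ _ _ _ fu) // inE us orbT.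
have [ybs|ynbs] := boolP (y \in b :: s); last first.
  rewrite !adjp_nmem2 //; apply: contra ynbs => /mapP[u us /esym fu].
  by rewrite -(finj _ _ _ _ fu) // inE us orbT.
exact: IH.
Qed.
Lemma iso_trans (T1 T2 T3 : finType) (e1 : rel T1) (e2 : rel T2) (e3 : rel T3) :
  isomorphic e1 e2 -> isomorphic e2 e3 -> isomorphic e1 e3.
Proof.
move=> /existsP[f /and3P[/injectiveP fi /forallP fs /forallP fe]].
move=> /existsP[g /and3P[/injectiveP gi /forallP gs /forallP ge]].
apply/existsP; exists [ffun x => g (f x)]; apply/and3P; split.
- by apply/injectiveP => x y; rewrite !ffunE => /gi /fi.
- apply/forallP => z; have /existsP[y /eqP<-] := gs z.
  have /existsP[x /eqP<-] := fs y.
  by apply/existsP; exists x; rewrite ffunE.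
- apply/forallP => x; apply/forallP => y; rewrite !ffunE.
  by rewrite (eqP (forallP (fe x) y)) (forallP (ge (f x)) (f y)).
Qed.

Lemma iso_card (T1 T2 : finType) (e1 : rel T1) (e2 : rel T2) :
  isomorphic e1 e2 -> #|T1| = #|T2|.
Proof.
move=> /existsP[f /and3P[/injectiveP fi /forallP fs _]].
rewrite -(card_codom fi); apply: eq_card => y.
rewrite inE; have /existsP[x /eqP<-] := fs y.
by rewrite codom_f.
Qed.

Definition siso (T T' : finType) (e : rel T) (Z : {set T}) (e' : rel T') (Z' : {set T'}) :=
  exists f : T -> T', [/\ {in Z &, injective f}, f @: Z = Z' &
                         {in Z &, forall x y, e x y = e' (f x) (f y)}].

Lemma siso_iso (T T' : finType) (e : rel T) Z (e' : rel T') Z' :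
  siso e Z e' Z' -> isomorphic (induced_rel e Z) (induced_rel e' Z').
Proof.
move=> [f [fi fim fe]].
have H : forall x : {x : T | x \in Z}, f (val x) \in Z'.
  by move=> x; rewrite -fim; apply: imset_f; exact: valP.
apply/existsP; exists [ffun x => exist (fun y => y \in Z') (f (val x)) (H x)].
apply/and3P; split.
- apply/injectiveP => x y; rewrite !ffunE => /(congr1 val) /= /fi.
  by move=> h; apply: val_inj; apply: h; exact: valP.
- apply/forallP => y; have : val y \in f @: Z by rewrite fim; exact: valP.
  case/imsetP=> x xZ yE.
  apply/existsP; exists (exist _ x xZ); rewrite ffunE; apply/eqP; apply: val_inj => /=.
  by rewrite yE.
- apply/forallP => x; apply/forallP => y; rewrite !ffunE /induced_rel /=.
  by apply/eqP; apply: fe; exact: valP.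
Qed.

Lemma siso_card (T T' : finType) (e : rel T) Z (e' : rel T') Z' :
  siso e Z e' Z' -> #|Z| = #|Z'|.
Proof. by move=> [f [fi <- _]]; rewrite card_in_imset. Qed.

Lemma siso_ext (T T' : finType) (e : rel T) (e' : rel T') Z1 Z2 Z1' Z2' :
  siso e Z1 e' Z1' -> siso e Z2 e' Z2' ->
  (forall x, x \in Z1 -> x \notin Z2) -> (forall x, x \in Z1' -> x \notin Z2') ->
  (forall x y, x \in Z1 -> y \in Z2 -> ~~ e x y && ~~ e y x) ->
  (forall x y, x \in Z1' -> y \in Z2' -> ~~ e' x y && ~~ e' y x) ->
  siso e (Z1 :|: Z2) e' (Z1' :|: Z2').
Proof.
move=> [f1 [f1i f1m f1e]] [f2 [f2i f2m f2e]] dis dis' ne ne'.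
have f1Z x : x \in Z1 -> f1 x \in Z1' by move=> xZ; rewrite -f1m imset_f.
have f2Z x : x \in Z2 -> f2 x \in Z2' by move=> xZ; rewrite -f2m imset_f.
have nZ1 x : x \in Z2 -> x \notin Z1 by move=> xZ; apply: contraTN xZ; exact: dis.
exists (fun x => if x \in Z1 then f1 x else f2 x); split.
- move=> x y; rewrite !inE => /orP[]xZ /orP[]yZ.
  + by rewrite xZ yZ; exact: f1i.
  + rewrite xZ (negbTE (nZ1 _ yZ)) => E.
    by have := dis' _ (f1Z _ xZ); rewrite E f2Z.
  + rewrite yZ (negbTE (nZ1 _ xZ)) => E.
    by have := dis' _ (f1Z _ yZ); rewrite -E f2Z.
  + by rewrite (negbTE (nZ1 _ xZ)) (negbTE (nZ1 _ yZ)); exact: f2i.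
- rewrite imsetU -f1m -f2m; congr (_ :|: _); apply: eq_in_imset => x xZ.
    by rewrite xZ.
  by rewrite (negbTE (nZ1 _ xZ)).
- move=> x y; rewrite !inE => /orP[]xZ /orP[]yZ.
  + by rewrite xZ yZ; exact: f1e.
  + rewrite xZ (negbTE (nZ1 _ yZ)).
    by have /andP[/negbTE-> _] := ne _ _ xZ yZ; have /andP[/negbTE-> _] := ne' _ _ (f1Z _ xZ) (f2Z _ yZ).
  + rewrite yZ (negbTE (nZ1 _ xZ)).
    by have /andP[_ /negbTE->] := ne _ _ yZ xZ; have /andP[_ /negbTE->] := ne' _ _ (f1Z _ yZ) (f2Z _ xZ).
  + by rewrite (negbTE (nZ1 _ xZ)) (negbTE (nZ1 _ yZ)); exact: f2e.
Qed.

Lemma siso_seq (T T' : finType) (e : rel T) (e' : rel T') (f0 : T -> T') (s : seq T) (s' : seq T') :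
  uniq s -> uniq s' -> size s = size s' ->
  {in s &, forall x y, e x y = adjp s x y} -> {in s' &, forall x y, e' x y = adjp s' x y} ->
  siso e [set x in s] e' [set x in s'].
Proof.
move=> us us' ss es es'.
pose f x := nth (f0 x) s' (index x s).
have fs x : x \in s -> f x \in s'.
  by move=> xs; rewrite /f mem_nth // -ss index_mem.
have fi : {in s &, injective f}.
  move=> x y xs ys; rewrite /f => E.
  have : index x s = index y s.
    apply/eqP; rewrite -(nth_uniq (f0 x) _ _ us') -?ss ?index_mem //.
    by rewrite E (set_nth_default (f0 x)) // -ss index_mem.
  by move=> /(congr1 (nth x s)); rewrite !nth_index.
have fmap : map f s = s'.
  case Es: s => [|x0 s0]; first by apply/esym/eqP; rewrite -size_eq0 -ss Es.
  rewrite -Es; apply: (@eq_from_nth _ (f0 x0)); rewrite size_map // => i lti.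
  rewrite (nth_map x0) // /f index_uniq //.
  by rewrite (set_nth_default (f0 x0)) // -ss.
exists f; split.
- by move=> x y; rewrite !inE; apply: fi.
- apply/setP => y; rewrite inE; apply/imsetP/idP => [[x]|ys].
    by rewrite inE => xs ->; apply: fs.
  by move: ys; rewrite -fmap => /mapP[x xs ->]; exists x; rewrite ?inE.
- move=> x y; rewrite !inE => xs ys.
  by rewrite es // es' ?fs // -fmap adjp_map.
Qed.

Lemma find_take (T : Type) (a : pred T) s : all (predC a) (take (find a s) s).
Proof. by elim: s => [|x s IH] //=; case: ifP => //= ->. Qed.

Lemma uniq_take_drop (T : eqType) (p r : seq T) i x :
  uniq (p ++ r) -> x \in take i p -> x \in drop i.+1 p ++ r -> False.
Proof.
rewrite -{1}(cat_take_drop i p) -catA cat_uniq => /and3P[_ /hasPn H _] xt xd.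
have : x \in drop i p ++ r.
  move: xd; rewrite !mem_cat => /orP[xd|->]; last by rewrite orbT.
  by rewrite -(drop_drop _ 1) in xd; rewrite (mem_drop xd).
by move/H; rewrite /= xt.
Qed.

Section Count.
Variables (TL : finType) (eL : rel TL).

Definition Phi (T : finType) (e : rel T) (Z : {set T}) := isomorphic (induced_rel e Z) eL.
Definition Uo (T : finType) (ps : seq (seq T)) : {set T} := [set x | x \in flatten ps].
Definition cnt (T : finType) (e : rel T) (ps : seq (seq T)) (R : {set T}) :=
  #|[set X : {set T} | (X \subset Uo ps) && Phi e (X :|: R)]|.

Definition Struct (T : finType) (e : rel T) (ps : seq (seq T)) (R : {set T}) :=
  [/\ uniq (flatten ps),
      forall x, x \in R -> x \notin flatten ps,
      forall p, p \in ps -> {in p &, forall x y, e x y = adjp p x y},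
      forall x y, x \in flatten ps -> y \in flatten ps -> e x y ->
        has (fun p => (x \in p) && (y \in p)) ps &
      forall x y, x \in R -> y \in flatten ps -> ~~ e x y && ~~ e y x].

Lemma Phi_siso (T T' : finType) (e : rel T) (e' : rel T') (Z : {set T}) (Z' : {set T'}) :
  siso e' Z' e Z -> Phi e Z -> Phi e' Z'.
Proof. by move=> /siso_iso H; apply: iso_trans. Qed.

Lemma Phi_card (T : finType) (e : rel T) (Z : {set T}) : Phi e Z -> #|Z| = #|TL|.
Proof.
move=> /iso_card <-; rewrite card_sig; apply: eq_card => x; by rewrite !inE.
Qed.

Lemma cnt_empty (T : finType) (e : rel T) (ps : seq (seq T)) (R : {set T}) :
  (forall X : {set T}, X \subset Uo ps -> Phi e (X :|: R) -> X = set0) -> cnt e ps R = Phi e R.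
Proof.
move=> H; rewrite /cnt.
have -> : [set X : {set T} | (X \subset Uo ps) && Phi e (X :|: R)] =
          if Phi e R then [set set0] else set0.
  apply/setP => X; rewrite inE; case: ifP => hR; rewrite !inE.
    apply/andP/eqP => [[s ph]|->]; first exact: H.
    by rewrite sub0set set0U.
  apply/negbTE/negP => /andP[s ph]; move: (ph); rewrite (H _ s ph) set0U.
  by rewrite hR.
by case: (Phi e R); rewrite ?cards1 ?cards0.
Qed.

Lemma cnt_base (T : finType) (e : rel T) (ps : seq (seq T)) (R : {set T}) :
  (forall x, x \in R -> x \notin flatten ps) -> #|TL| <= #|R| -> cnt e ps R = Phi e R.
Proof.
move=> dis le; apply: cnt_empty => X s ph.
have c := Phi_card ph.
have sR : R \subset X :|: R by apply: subsetUr.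
have /geq_leqif H' := subset_leqif_cards sR.
have /eqP E : R == X :|: R by rewrite -H' c.
apply/setP => x; rewrite inE; apply/negbTE/negP => xX.
have xR : x \in R by rewrite E inE xX.
by have := dis _ xR; move: (subsetP s _ xX); rewrite inE => ->.
Qed.

Lemma cnt_nil (T : finType) (e : rel T) (ps : seq (seq T)) (R : {set T}) : flatten ps = [::] -> cnt e ps R = Phi e R.
Proof.
move=> E; apply: cnt_empty => X s _; apply/eqP; rewrite -subset0.
by apply: subset_trans s _; apply/subsetP => x; rewrite inE E.
Qed.

Lemma cnt_Uo (T : finType) (e : rel T) (ps ps2 : seq (seq T)) (R : {set T}) :
  Uo ps = Uo ps2 -> cnt e ps R = cnt e ps2 R.
Proof. by rewrite /cnt => ->. Qed.

End Count.

Lemma uniq_mid (T : eqType) (s1 s2 : seq T) z : uniq (s1 ++ z :: s2) -> z \notin s1 ++ s2.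
Proof.
rewrite cat_uniq => /and3P[_ H /andP[zs2 _]]; rewrite mem_cat negb_or zs2 andbT.
by apply: contra H => zs1; apply/hasP; exists z => //; rewrite inE eqxx.
Qed.

Section Peel.
Variables (TL : finType) (eL : rel TL).
Local Notation Phi := (Phi eL).
Local Notation cnt := (cnt eL).

Lemma peel (T : finType) (e : rel T) (p : seq T) (rest : seq (seq T)) (R : {set T}) :
  uniq (p ++ flatten rest) ->
  cnt e (p :: rest) R =
  \sum_(i < (size p).+1) cnt e (drop i.+1 p :: rest) (R :|: [set x in take i p]).
Proof.
move=> up.
pose fi (X : {set T}) : 'I_(size p).+1 := inord (find (fun x => x \notin X) p).
rewrite /cnt -sum1_card (partition_big fi predT) //=.
apply: eq_bigr => i _; rewrite sum1dep_card.
have findE : forall X : {set T}, (fi X == i) = (find (fun x => x \notin X) p == i).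
  move=> X; rewrite /fi; apply/eqP/eqP => [<-|E].
    by rewrite /= inordK // ltnS find_size.
  by apply: val_inj; rewrite /= inordK ?E // ltnS find_size.
set A := [set X0 : {set T} | (X0 \subset Uo (p :: rest)) && Phi e (X0 :|: R)].
have -> : [set X : {set T} | (X \in A) && (fi X == i)] =
          [set X : {set T} | (X \in A) && (find (fun x => x \notin X) p == i)].
  by apply/setP => X; rewrite !inE findE.
have lei : i <= size p by rewrite -ltnS.
move: (nat_of_ord i) lei => {findE fi}i lei.
set Ti := [set x in take i p].
set U' := Uo (drop i.+1 p :: rest).
have dis : forall x, x \in Ti -> x \notin U'.
  move=> x; rewrite !inE => xt; apply/negP => xd.
  by apply: (uniq_take_drop up xt); rewrite /= in xd.
have UU : U' \subset Uo (p :: rest).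
  apply/subsetP => x; rewrite !inE /= !mem_cat => /orP[xd|->]; last by rewrite orbT.
  by rewrite (mem_drop xd).
have TU : Ti \subset Uo (p :: rest).
  by apply/subsetP => x; rewrite !inE /= mem_cat => /mem_take ->.
set B := [set Y : {set T} | (Y \subset U') && Phi e (Y :|: (R :|: Ti))].
have -> : [set X : {set T} | (X \in A) && (find (fun x => x \notin X) p == i)]
          = [set Y :|: Ti | Y in B].
  apply/setP => X; rewrite !inE; apply/idP/imsetP.
  - move=> /andP[/andP[sX ph] /eqP fX].
    have tX : Ti \subset X.
      apply/subsetP => x; rewrite inE => xt.
      have := find_take (fun x => x \notin X) p; rewrite fX => /allP /(_ x xt).
      by rewrite /= negbK.
    have eqX : X :\: Ti :|: Ti = X.
      apply/setP => x; rewrite in_setU in_setD.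
      by case: (boolP (x \in Ti)) => xt /=; [rewrite (subsetP tX) | rewrite orbF].
    exists (X :\: Ti).
      rewrite inE; apply/andP; split.
        apply/subsetP => x; rewrite !inE => /andP[xt xX].
        move: (subsetP sX x xX); rewrite inE /= mem_cat => /orP[xp|xr]; last by rewrite mem_cat xr orbT.
        rewrite mem_cat; apply/orP; left.
        have : x \in take i p ++ drop i p by rewrite cat_take_drop.
        rewrite mem_cat (negbTE xt) /=.
        have [ltis|] := ltnP i (size p); last by move/drop_oversize ->.
        rewrite (drop_nth x ltis) inE => /orP[/eqP xz|//].
        have : has (fun x => x \notin X) p by rewrite has_find fX.
        move=> /(nth_find x); rewrite fX -xz xX //.
      by rewrite setUCA eqX setUC.
    by rewrite eqX.
  - case=> Y; rewrite inE => /andP[sY ph] ->.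
    rewrite (setUC R) setUA in ph; rewrite ph andbT; apply/andP; split.
      by rewrite subUset (subset_trans sY UU) TU.
    apply/eqP.
    rewrite -[X in find _ X](cat_take_drop i p) find_cat.
    have -> : has (fun x => x \notin Y :|: Ti) (take i p) = false.
      by apply/negbTE/hasPn => x xt; rewrite /= negbK inE orbC inE xt.
    rewrite size_takel //.
    have [ltis|] := ltnP i (size p); last by move/drop_oversize ->; rewrite addn0.
    case Ep: p ltis => [|w q] //= ltis; rewrite -Ep.
    rewrite (drop_nth w) ?Ep //= -Ep.
    have hz : nth w p i \notin take i p ++ (drop i.+1 p ++ flatten rest).
      apply: uniq_mid.
      by rewrite -cat_cons -(drop_nth w) ?Ep // -Ep catA cat_take_drop.
    move: hz; rewrite mem_cat negb_or => /andP[zt zd].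
    have -> : nth w p i \notin Y :|: Ti.
      rewrite inE negb_or inE zt andbT; apply: contra zd => zY.
      by move: (subsetP sY _ zY); rewrite inE.
    by rewrite addn0.
rewrite card_in_imset //.
move=> Y1 Y2; rewrite !inE => /andP[s1 _] /andP[s2 _] E.
apply/setP => x; apply/idP/idP => xY.
  have : x \in Y2 :|: Ti by rewrite -E inE xY.
  rewrite inE => /orP[//|xt]; have := dis _ xt; by rewrite (subsetP s1 _ xY).
have : x \in Y1 :|: Ti by rewrite E inE xY.
rewrite inE => /orP[//|xt]; have := dis _ xt; by rewrite (subsetP s2 _ xY).
Qed.
End Peel.

Lemma take_drop_dis (T : eqType) (p : seq T) i x :
  uniq p -> x \in take i p -> x \in drop i p -> False.
Proof.
rewrite -{1}(cat_take_drop i p) cat_uniq => /and3P[_ /hasPn H _] xt xd.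
by have := H _ xd; rewrite /= xt.
Qed.

Lemma adjp_td (T : eqType) (p : seq T) i x y :
  uniq p -> x \in take i p -> y \in drop i.+1 p -> adjp p x y = false.
Proof.
move=> up xt yd.
have lt : i < size p.
  by rewrite ltnNge; apply/negP => /leqW /drop_oversize E; rewrite E in yd.
have E : p = take i p ++ nth y p i :: drop i.+1 p by rewrite -drop_nth // cat_take_drop.
by rewrite E adjp_gap // -E.
Qed.

Lemma mem_flatten_in (T : eqType) (p : seq T) (ps : seq (seq T)) x :
  p \in ps -> x \in p -> x \in flatten ps.
Proof. by move=> pin xp; apply/flattenP; exists p. Qed.

Lemma Struct_perm (T : finType) (e : rel T) (ps ps2 : seq (seq T)) (R : {set T}) :
  perm_eq ps ps2 -> Struct e ps R -> Struct e ps2 R.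
Proof.
move=> H [u1 u2 u3 u4 u5].
have fl := perm_mem (perm_flatten H).
split.
- by rewrite -(perm_uniq (perm_flatten H)).
- by move=> x xR; rewrite -fl; apply: u2.
- by move=> p pin; apply: u3; rewrite (perm_mem H).
- by move=> x y; rewrite -!fl -(perm_has _ H); apply: u4.
- by move=> x y xR; rewrite -fl; apply: u5.
Qed.

Lemma Uo_perm (T : finType) (ps ps2 : seq (seq T)) : perm_eq ps ps2 -> Uo ps = Uo ps2.
Proof.
by move=> H; apply/setP => x; rewrite !inE (perm_mem (perm_flatten H)).
Qed.

Lemma Struct_drop (T : finType) (e : rel T) p rest (R : {set T}) i :
  Struct e (p :: rest) R -> 
  Struct e (drop i.+1 p :: rest) (R :|: [set x in take i p]).
Proof.
move=> [u1 u2 u3 u4 u5].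
have up : uniq p by move: u1; rewrite /= cat_uniq => /andP[].
have prest : forall x, x \in p -> x \in flatten rest -> False.
  move: u1; rewrite /= cat_uniq => /and3P[_ /hasPn H _] x xp xr.
  by have := H _ xr; rewrite /= xp.
have dp : forall x, x \in drop i.+1 p -> x \in p by move=> x; apply: mem_drop.
have fl : forall x, x \in flatten (drop i.+1 p :: rest) -> x \in flatten (p :: rest).
  by move=> x; rewrite /= !mem_cat => /orP[/dp->|->]; rewrite ?orbT.
have xpf : forall x, x \in p -> x \in flatten (p :: rest) by move=> x xp; rewrite /= mem_cat xp.
have samep : forall x y, x \in p -> y \in flatten (p :: rest) -> e x y || e y x -> y \in p.
  move=> x y xp yf /orP[]exy.
    have /hasP[p0] := u4 _ _ (xpf _ xp) yf exy.
    rewrite inE => /orP[/eqP->|p0r] /andP[]// xp0 _.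
    by case: (prest x) => //; apply: mem_flatten_in p0r xp0.
  have /hasP[p0] := u4 _ _ yf (xpf _ xp) exy.
  rewrite inE => /orP[/eqP->|p0r] /andP[]// _ xp0.
  by case: (prest x) => //; apply: mem_flatten_in p0r xp0.
split.
- apply: subseq_uniq u1; apply: cat_subseq (drop_subseq _ _) (subseq_refl _).
- move=> x; rewrite inE => /orP[xR|]; first by apply: contra (u2 _ xR); apply: fl.
  rewrite inE => xt; apply/negP => xd; exact: uniq_take_drop u1 xt xd.
- move=> p0; rewrite inE => /orP[/eqP->|p0r]; last by apply: u3; rewrite inE p0r orbT.
  move=> x y xd yd; rewrite (u3 p) ?inE ?eqxx ?dp //.
  rewrite -[p in adjp p](cat_take_drop i.+1) adjp_catr //.
    by apply/negP => xt; apply: take_drop_dis up xt xd.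
  by apply/negP => yt; apply: take_drop_dis up yt yd.
- move=> x y xf yf exy.
  have /hasP[p0] := u4 _ _ (fl _ xf) (fl _ yf) exy.
  rewrite inE => /orP[/eqP->|p0r] /andP[xp0 yp0]; last by apply/hasP; exists p0; rewrite ?inE ?p0r ?orbT ?xp0.
  apply/hasP; exists (drop i.+1 p); first by rewrite inE eqxx.
  move: xf yf; rewrite /= !mem_cat => /orP[->|xr] /orP[->|yr] //.
  + by case: (prest y).
  + by case: (prest x).
  + by case: (prest x).
- move=> x y; rewrite inE => /orP[xR|]; first by move=> yf; apply: u5 => //; apply: fl.
  rewrite inE => xt yf.
  have xp := mem_take xt.
  have [|nyp] := boolP (y \in p); last first.
    by apply/andP; split; apply/negP => exy; apply: (negP nyp); apply: samep xp (fl _ yf) _; rewrite exy ?orbT.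
  move=> yp; have yd : y \in drop i.+1 p.
    by move: yf; rewrite /= mem_cat => /orP[//|yr]; case: (prest y).
  rewrite (u3 p) ?inE ?eqxx ?(u3 p) ?inE ?eqxx //.
  by rewrite [adjp p y x]adjpC (adjp_td up xt yd).
Qed.

Lemma run_siso (T T' : finType) (e : rel T) (e' : rel T') p rest p' rest' R R' i :
  Struct e (p :: rest) R -> Struct e' (p' :: rest') R' -> i <= size p -> i <= size p' ->
  siso e R e' R' -> siso e (R :|: [set x in take i p]) e' (R' :|: [set x in take i p']).
Proof.
move=> [u1 u2 u3 u4 u5] [v1 v2 v3 v4 v5] lp lp' sR.
have up : uniq p by move: u1; rewrite /= cat_uniq => /andP[].
have up' : uniq p' by move: v1; rewrite /= cat_uniq => /andP[].
have [f0 _] := sR.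
apply: siso_ext => //.
- apply: (siso_seq f0); rewrite ?take_uniq ?size_takel //.
  + move=> x y xt yt; rewrite (u3 p) ?inE ?eqxx ?(mem_take xt) ?(mem_take yt) //.
    rewrite -[p in adjp p](cat_take_drop i) adjp_catl //.
      by apply/negP => xd; apply: take_drop_dis up xt xd.
    by apply/negP => yd; apply: take_drop_dis up yt yd.
  + move=> x y xt yt; rewrite (v3 p') ?inE ?eqxx ?(mem_take xt) ?(mem_take yt) //.
    rewrite -[p' in adjp p'](cat_take_drop i) adjp_catl //.
      by apply/negP => xd; apply: take_drop_dis up' xt xd.
    by apply/negP => yd; apply: take_drop_dis up' yt yd.
- move=> x xR; rewrite inE; apply: contra (u2 _ xR) => xt.
  by rewrite /= mem_cat (mem_take xt).
- move=> x xR; rewrite inE; apply: contra (v2 _ xR) => xt.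
  by rewrite /= mem_cat (mem_take xt).
- move=> x y xR; rewrite inE => yt; apply: u5 => //.
  by rewrite /= mem_cat (mem_take yt).
- move=> x y xR; rewrite inE => yt; apply: v5 => //.
  by rewrite /= mem_cat (mem_take yt).
Qed.

Lemma card_run (T : finType) (e : rel T) p rest (R : {set T}) i :
  Struct e (p :: rest) R -> i <= size p -> #|R :|: [set x in take i p]| = #|R| + i.
Proof.
move=> [u1 u2 _ _ _] lp.
have up : uniq p by move: u1; rewrite /= cat_uniq => /andP[].
rewrite cardsU.
have -> : R :&: [set x in take i p] = set0.
  apply/setP => x; rewrite !inE; apply/negbTE/negP => /andP[xR xt].
  by have := u2 _ xR; rewrite /= mem_cat (mem_take xt).
rewrite cards0 subn0; congr (_ + _).
rewrite -[X in _ = X](size_takel lp) -(card_uniqP (take_uniq i up)).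
by apply: eq_card => x; rewrite inE.
Qed.

Lemma reorder (T : finType) (e : rel T) (ps : seq (seq T)) (R : {set T}) p :
  p \in ps -> Struct e ps R ->
  [/\ Struct e (p :: rem p ps) R, Uo ps = Uo (p :: rem p ps) &
      perm_eq (map size ps) (size p :: map size (rem p ps))].
Proof.
move=> pin S; have H := perm_to_rem pin.
split; first exact: Struct_perm H S.
  exact: Uo_perm.
by have := perm_map size H.
Qed.

Lemma sumn_ge (l : seq nat) m : all (fun n => m <= n) l -> size l * m <= sumn l.
Proof.
elim: l => [|a l IH] //= /andP[ma al].
by rewrite mulSn leq_add // IH.
Qed.

Lemma sumn_gt (l : seq nat) m : all (fun n => m <= n) l -> has (fun n => m < n) l ->
  size l * m < sumn l.
Proof.
elim: l => [|a l IH] //= /andP[ma al] /orP[lt|hl].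
  by rewrite mulSn -addSn leq_add // sumn_ge.
by rewrite mulSn -addnS leq_add // IH.
Qed.

Lemma sumn_eq_nseq (l : seq nat) m : all (fun n => m <= n) l -> sumn l = size l * m ->
  l = nseq (size l) m.
Proof.
move=> al E; apply/all_pred1P; apply/allP => n nl /=.
have [lt|] := boolP (has (fun n => m < n) l).
  by have := sumn_gt al lt; rewrite E ltnn.
move/hasPn/(_ n nl); rewrite -leqNgt => le.
by rewrite eqn_leq le (allP al n nl).
Qed.

Lemma sum_trunc (F : nat -> nat) n k : k <= n -> (forall i, k < i -> i <= n -> F i = 0) ->
  \sum_(i < n.+1) F i = \sum_(i < k.+1) F i.
Proof.
move=> kn F0; rewrite -(big_mkord xpredT F) -(big_mkord xpredT F).
rewrite (@big_cat_nat _ _ _ k.+1) //=.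
rewrite [X in _ + X]big1_seq ?addn0 // => i /andP[_]; rewrite mem_index_iota => /andP[lo hi].
exact: F0.
Qed.

Section Main.
Variables (TL : finType) (eL : rel TL).
Local Notation Phi := (Phi eL).
Local Notation cnt := (cnt eL).

Lemma Phi_eq (T T' : finType) (e : rel T) (e' : rel T') Z Z' :
  siso e Z e' Z' -> siso e' Z' e Z -> Phi e Z = Phi e' Z'.
Proof. by move=> s1 s2; apply/idP/idP; apply: Phi_siso. Qed.

Lemma flatten_nil (T : Type) (ps : seq (seq T)) : sumn (map size ps) = 0 -> flatten ps = [::].
Proof. by move=> E; apply: size0nil; rewrite size_flatten /shape E. Qed.

Lemma sameMS N : forall (T T' : finType) (e : rel T) (e' : rel T') ps ps' R R',
  sumn (map size ps) = N -> Struct e ps R -> Struct e' ps' R' ->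
  siso e R e' R' -> siso e' R' e R ->
  perm_eq (map size ps) (map size ps') -> cnt e ps R = cnt e' ps' R'.
Proof.
elim/ltn_ind: N => N IH T T' e e' ps ps' R R' EN S S' sR sR' Hp.
have [/hasP[p pin pne]|/hasPn allnil] := boolP (has (fun p : seq T => p != [::]) ps); last first.
  have z : sumn (map size ps) = 0.
    have : all (pred1 0) (map size ps).
      by rewrite all_map; apply/allP => q qin /=; rewrite size_eq0 -(negbK (q == [::])) allnil.
    by move/all_pred1P ->; rewrite sumn_nseq.
  have f0 : flatten ps = [::] by exact: flatten_nil.
  have f0' : flatten ps' = [::] by apply: flatten_nil; rewrite -(perm_sumn Hp).
  by rewrite (cnt_nil _ _ _ f0) (cnt_nil _ _ _ f0') (Phi_eq sR sR').
have : size p \in map size ps' by rewrite -(perm_mem Hp) map_f.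
case/mapP => p' pin' Esz.
have [S1 U1 P1] := reorder pin S.
have [S1' U1' P1'] := reorder pin' S'.
have -> : cnt e ps R = cnt e (p :: rem p ps) R by apply: cnt_Uo.
have -> : cnt e' ps' R' = cnt e' (p' :: rem p' ps') R' by apply: cnt_Uo.
have Hr : perm_eq (map size (rem p ps)) (map size (rem p' ps')).
  rewrite -(perm_cons (size p)); apply: (@perm_trans _ (map size ps)); first by rewrite perm_sym.
  by apply: (perm_trans Hp); rewrite Esz.
have EN' : N = size p + sumn (map size (rem p ps)) by rewrite -EN (perm_sumn P1).
have pos : 0 < size p by rewrite lt0n size_eq0.
have [u1 _ _ _ _] := S1; have [u1' _ _ _ _] := S1'.
rewrite (@peel _ eL _ e p (rem p ps) R u1) (@peel _ eL _ e' p' (rem p' ps') R' u1') -Esz.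
apply: eq_bigr => i _.
have lei : i <= size p by rewrite -ltnS.
apply: (IH (sumn (map size (drop i.+1 p :: rem p ps)))).
- by rewrite /= size_drop EN' ltn_add2r ltn_subrL pos.
- by [].
- exact: Struct_drop.
- exact: Struct_drop.
- by apply: (run_siso S1 S1') => //; rewrite -Esz.
- by apply: (run_siso S1' S1) => //; rewrite -Esz.
- by rewrite /= !size_drop -Esz perm_cons.
Qed.

End Main.

Lemma sumn_le (l : seq nat) m : all (fun n => n <= m) l -> sumn l <= size l * m.
Proof.
elim: l => [|a l IH] //= /andP[ma al].
by rewrite mulSn leq_add // IH.
Qed.

Section Main2.
Variables (TL : finType) (eL : rel TL).
Local Notation Phi := (Phi eL).
Local Notation cnt := (cnt eL).

Lemma mainM N : forall (T T' : finType) (e : rel T) (e' : rel T') ps ps' R R',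
  sumn (map size ps) = N -> Struct e ps R -> Struct e' ps' R' ->
  siso e R e' R' -> siso e' R' e R ->
  size ps = size ps' -> sumn (map size ps) = sumn (map size ps') ->
  all (fun n => (#|TL| - #|R|).-1 <= n) (map size ps) ->
  all (fun n => (#|TL| - #|R|).-1 <= n) (map size ps') ->
  cnt e ps R = cnt e' ps' R'.
Proof.
elim/ltn_ind: N => N IH T T' e e' ps ps' R R' EN S S' sR sR' Ec Es A A'.
have cR : #|R'| = #|R| by rewrite (siso_card sR).
have [u1 u2 _ _ _] := S; have [v1 v2 _ _ _] := S'.
have [k0|kpos] := posnP (#|TL| - #|R|).
  have le : #|TL| <= #|R| by rewrite -subn_eq0 k0.
  have le' : #|TL| <= #|R'| by rewrite cR.
  by rewrite (cnt_base _ _ u2 le) (cnt_base _ _ v2 le') (Phi_eq eL sR sR').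
move: A A' kpos; set k := #|TL| - #|R| => A A' kpos.
have [/hasP[n]|/hasPn nbig] := boolP (has (fun n => k <= n) (map size ps)); last first.
  have E1 : map size ps = nseq (size (map size ps)) k.-1.
    apply/all_pred1P; apply/allP => n nin /=.
    rewrite eqn_leq (allP A n nin) andbT -ltnS prednK //.
    by rewrite ltnNge; apply: nbig.
  have E2 : map size ps' = nseq (size (map size ps')) k.-1.
    apply: sumn_eq_nseq A' _.
    by rewrite -Es E1 sumn_nseq !size_map Ec mulnC.
  apply: (@sameMS _ eL N) => //.
  by rewrite E1 E2 !size_map Ec.
case/mapP => p pin -> {n} kp.
have : has (fun n => k <= n) (map size ps').
  apply/negPn/negP => /hasPn nb'.
  have le1 : sumn (map size ps') <= size (map size ps') * k.-1.
    apply: sumn_le; apply/allP => n nin /=.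
    by rewrite -ltnS prednK // ltnNge; apply: nb'.
  have lt1 : size (map size ps) * k.-1 < sumn (map size ps).
    apply: sumn_gt A _; apply/hasP; exists (size p); first exact: map_f.
    by rewrite -ltnS prednK.
  by move: lt1 le1; rewrite Es !size_map Ec ltnNge => /negP.
case/hasP => n' /mapP[p' pin' ->] {n'} kp'.
have [S1 U1 P1] := reorder pin S.
have [S1' U1' P1'] := reorder pin' S'.
have -> : cnt e ps R = cnt e (p :: rem p ps) R by apply: cnt_Uo.
have -> : cnt e' ps' R' = cnt e' (p' :: rem p' ps') R' by apply: cnt_Uo.
have [w1 _ _ _ _] := S1; have [w1' _ _ _ _] := S1'.
rewrite (@peel _ eL _ e p (rem p ps) R w1) (@peel _ eL _ e' p' (rem p' ps') R' w1').
have zero : forall (T : finType) (e : rel T) p rest (R : {set T}) i,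
    Struct e (p :: rest) R -> #|TL| < #|R| + i -> i <= size p ->
    cnt e (drop i.+1 p :: rest) (R :|: [set x in take i p]) = 0.
  move=> T0 e0 p0 r0 R0 i0 S0 lt0 le0.
  have [_ z2 _ _ _] := Struct_drop i0 S0.
  rewrite (cnt_base _ _ z2); last by rewrite (card_run S0 le0) ltnW.
  case ph: (Phi _ _) => //; have := Phi_card ph.
  by rewrite (card_run S0 le0) => E; rewrite E ltnn in lt0.
rewrite (sum_trunc (F := fun i => cnt e (drop i.+1 p :: rem p ps) (R :|: [set x in take i p])) kp).
  rewrite (sum_trunc (F := fun i => cnt e' (drop i.+1 p' :: rem p' ps') (R' :|: [set x in take i p'])) kp').
    apply: eq_bigr => i _.
    have lei : i <= k by rewrite -ltnS.
    move: (nat_of_ord i) lei => {}i lei.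
    have lip : i <= size p by apply: leq_trans kp.
    have lip' : i <= size p' by apply: leq_trans kp'.
    have [_ z2 _ _ _] := Struct_drop i S1.
    have [_ z2' _ _ _] := Struct_drop i S1'.
    have sr1 := run_siso S1 S1' lip lip' sR.
    have sr2 := run_siso S1' S1 lip' lip sR'.
    have [ltik|] := ltnP i k; last first.
      move=> kle; have Eik : i = k by apply/eqP; rewrite eqn_leq lei kle.
      have RT : #|R| <= #|TL| by apply: ltnW; rewrite -subn_gt0.
      rewrite (cnt_base _ _ z2); last by rewrite (card_run S1 lip) Eik /k subnKC.
      rewrite (cnt_base _ _ z2'); last by rewrite (card_run S1' lip') cR Eik /k subnKC.
      by rewrite (Phi_eq eL sr1 sr2).
    have EN' : N = size p + sumn (map size (rem p ps)) by rewrite -EN (perm_sumn P1).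
    have EN2 : N = size p' + sumn (map size (rem p' ps')) by rewrite -EN Es (perm_sumn P1').
    have Ar : all (fun n => k.-1 <= n) (map size (rem p ps)).
      by move: A; rewrite (perm_all _ P1) /= => /andP[].
    have Ar' : all (fun n => k.-1 <= n) (map size (rem p' ps')).
      by move: A'; rewrite (perm_all _ P1') /= => /andP[].
    apply: (IH (sumn (map size (drop i.+1 p :: rem p ps)))).
    - rewrite /= size_drop EN'.
      by rewrite ltn_add2r ltn_subrL (leq_trans kpos kp).
    - by [].
    - exact: Struct_drop.
    - exact: Struct_drop.
    - exact: sr1.
    - exact: sr2.
    - by rewrite /= !size_rem // Ec.
    - rewrite /= !size_drop.
      apply/(@addnI i.+1); rewrite !addnA !subnKC -?EN' -?EN2 //.
        exact: leq_trans ltik kp'.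
      exact: leq_trans ltik kp.
    - rewrite (card_run S1 lip) /= size_drop; apply/andP; split.
        by rewrite subnDA -/k -subnS leq_sub2r.
      apply: sub_all Ar => n /=; apply: leq_trans.
      by rewrite subnDA -/k -!subn1 leq_sub2r // leq_subr.
    - rewrite (card_run S1 lip) /= size_drop; apply/andP; split.
        by rewrite subnDA -/k -subnS leq_sub2r.
      apply: sub_all Ar' => n /=; apply: leq_trans.
      by rewrite subnDA -/k -!subn1 leq_sub2r // leq_subr.
  move=> i lt le; apply: zero => //; rewrite cR -ltn_subLR //.
  by apply: ltnW; rewrite -subn_gt0.
move=> i lt le; apply: zero => //; rewrite -ltn_subLR //.
by apply: ltnW; rewrite -subn_gt0.
Qed.
End Main2.

Lemma adjp_iota m n a b : a \in iota m n -> b \in iota m n ->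
  adjp (iota m n) a b = (a.+1 == b) || (b.+1 == a).
Proof.
elim: n m => [|n IH] m //.
case: n IH => [|n] IH.
  rewrite !inE => /eqP-> /eqP->.
  by rewrite /= !eqn_leq ltnn.
move=> ha hb.
have [am bm] : m <= a /\ m <= b by move: ha hb; rewrite !mem_iota => /andP[-> _] /andP[-> _].
have E1 : iota m n.+2 = [:: m, m.+1 & iota m.+2 n] by [].
have E2 : iota m.+1 n.+1 = m.+1 :: iota m.+2 n by [].
have mn : m \notin iota m.+1 n.+1 by rewrite mem_iota ltnn.
have m1 : (m.+1 == m) = false by rewrite eqn_leq ltnn.
have m2 : (m == m.+1) = false by rewrite eq_sym.
move: ha hb; rewrite E1 adjp_cons2 -E2 !in_cons.
have [->|na] := eqVneq a m; have [->|nb] := eqVneq b m => // ha hb.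
- have -> : adjp (iota m.+1 n.+1) m m = false by apply: adjp_nmem.
  by rewrite /edge2 m1 m2 !andbF !andFb.
- have -> : adjp (iota m.+1 n.+1) m b = false by apply: adjp_nmem.
  have -> : (b.+1 == m) = false by rewrite gtn_eqF // ltnS.
  by rewrite /edge2 eqxx m2 /= !orbF eq_sym.
- have -> : adjp (iota m.+1 n.+1) a m = false by apply: adjp_nmem2.
  have -> : (a.+1 == m) = false by rewrite gtn_eqF // ltnS.
  by rewrite /edge2 eqxx m2 andbF andbT orbF eq_sym.
- rewrite IH //.
  by rewrite /edge2 (negbTE na) (negbTE nb) /= andbF.
Qed.

Lemma adjp_enum_ord n (i j : 'I_n) : adjp (enum 'I_n) i j = path_rel i j.
Proof.
have H : adjp (map val (enum 'I_n)) (val i) (val j) = adjp (enum 'I_n) i j.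
  by apply: adjp_map; rewrite ?mem_enum // => x y _ _; apply: val_inj.
by rewrite -H val_enum_ord adjp_iota // mem_iota /= add0n ltn_ord.
Qed.

Definition good (T : finType) (e : rel T) (A : {set T}) (p : seq T) : bool :=
  [&& uniq p, [forall x, (x \in A) == (x \in p)] &
      [forall x, forall y, (x \in p) ==> (y \in p) ==> (e x y == adjp p x y)]].

Lemma block_exists (T : finType) (e : rel T) (A : {set T}) :
  isomorphic (induced_rel e A) (@path_rel #|A|) -> exists p, good e A p.
Proof.
move=> /existsP[g /and3P[/injectiveP gi /forallP gs /forallP ge]].
case: (pickP (@predT {x : T | x \in A})) => [x0 _|S0]; last first.
  exists [::]; apply/and3P; split => //.
    apply/forallP => x; rewrite in_nil eqbF_neg; apply/negP => xA.
    by have := S0 (exist _ x xA).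
  by apply/forallP => x; apply/forallP => y.
pose ginv (j : 'I_#|A|) := odflt x0 [pick x | g x == j].
have ginvK j : g (ginv j) = j.
  rewrite /ginv; case: pickP => [x /eqP //|none].
  have /existsP[x /eqP gx] := gs j.
  by have := none x; rewrite gx eqxx.
have gK x : ginv (g x) = x by apply: gi; rewrite ginvK.
pose h j := val (ginv j).
have hi : injective h.
  by move=> j1 j2 /val_inj E; rewrite -(ginvK j1) E ginvK.
exists (map h (enum 'I_#|A|)).
apply/and3P; split.
- by rewrite map_inj_uniq // enum_uniq.
- apply/forallP => x; apply/eqP; apply/idP/idP.
    move=> xA; apply/mapP; exists (g (exist _ x xA)); first by rewrite mem_enum.
    by rewrite /h gK.
  by case/mapP => j _ ->; exact: valP.
- apply/forallP => x; apply/forallP => y.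
  apply/implyP => /mapP[j1 _ ->]; apply/implyP => /mapP[j2 _ ->].
  rewrite adjp_map ?mem_enum //; last by move=> ? ? _ _; apply: hi.
  rewrite adjp_enum_ord.
  have := forallP (ge (ginv j1)) (ginv j2).
  by rewrite !ginvK.
Qed.

Definition pathof (T : finType) (e : rel T) (A : {set T}) : seq T :=
  if [pick t : (#|A|).-tuple T | good e A t] is Some t then val t else [::].

Lemma good_size (T : finType) (e : rel T) (A : {set T}) p : good e A p -> size p = #|A|.
Proof.
move=> /and3P[up /forallP eqA _].
rewrite -(card_uniqP up); apply: eq_card => x; by rewrite (eqP (eqA x)).
Qed.

Lemma pathofP (T : finType) (e : rel T) (A : {set T}) :
  isomorphic (induced_rel e A) (@path_rel #|A|) -> good e A (pathof e A).
Proof.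
move=> /block_exists [p gp]; rewrite /pathof.
case: pickP => [t //|none].
have sz : size p == #|A| by rewrite (good_size gp).
by have := none (Tuple sz); rewrite /= gp.
Qed.

Lemma has_cons (T : Type) (a : pred T) x s : has a (x :: s) = a x || has a s.
Proof. by []. Qed.

Lemma set2C (T : finType) (a b : T) : [set a; b] = [set b; a].
Proof. by apply/setP => x; rewrite !in_set2 orbC. Qed.

Definition Eset1 (T : finType) (p : seq T) : {set {set T}} :=
  [set A : {set T} | [exists x, exists y, (A == [set x; y]) && adjp p x y]].

Lemma Eset1_mem (T : finType) (p : seq T) A z : A \in Eset1 p -> z \in A -> z \in p.
Proof.
rewrite inE => /existsP[x /existsP[y /andP[/eqP-> /adjp_mem/andP[xp yp]]]].
by rewrite in_set2 => /orP[]/eqP->.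
Qed.

Lemma Eset1_card (T : finType) (p : seq T) : uniq p -> #|Eset1 p| = (size p).-1.
Proof.
elim: p => [|a p IH].
  move=> _; apply/eqP; rewrite cards_eq0; apply/eqP/setP => A; rewrite !inE.
  by apply/negbTE/negP => /existsP[x /existsP[y /andP[_]]].
case: p IH => [|b q] IH.
  move=> _; apply/eqP; rewrite cards_eq0; apply/eqP/setP => A; rewrite !inE.
  by apply/negbTE/negP => /existsP[x /existsP[y /andP[_]]].
move=> /andP[an uq].
have -> : Eset1 [:: a, b & q] = [set a; b] |: Eset1 (b :: q).
  apply/setP => A; rewrite in_setU1 /Eset1 !in_set; apply/existsP/orP.
  - case=> x /existsP[y /andP[/eqP->]]; rewrite adjp_cons2 => /orP[ex|ad].
      left; move: ex; rewrite /edge2 => /orP[]/andP[/eqP-> /eqP->] //.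
      by rewrite set2C.
    by right; apply/existsP; exists x; apply/existsP; exists y; rewrite eqxx ad.
  - case=> [/eqP->|/existsP[x /existsP[y /andP[/eqP-> ad]]]].
      by exists a; apply/existsP; exists b; rewrite eqxx adjp_cons2 /edge2 !eqxx.
    by exists x; apply/existsP; exists y; rewrite eqxx adjp_cons2 ad orbT.
rewrite cardsU1 IH //=.
have -> : [set a; b] \notin Eset1 (b :: q).
  by apply/negP => /Eset1_mem /(_ (set21 a b)); apply/negP.
by [].
Qed.

Definition Eset (T : finType) (ps : seq (seq T)) : {set {set T}} :=
  [set A : {set T} | [exists x, exists y, (A == [set x; y]) && has (fun p => adjp p x y) ps]].

Lemma Eset_card (T : finType) (ps : seq (seq T)) :
  uniq (flatten ps) -> #|Eset ps| = sumn (map (fun p => (size p).-1) ps).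
Proof.
elim: ps => [|p ps IH].
  move=> _; apply/eqP; rewrite cards_eq0; apply/eqP/setP => A; rewrite !inE.
  by apply/negbTE/negP => /existsP[x /existsP[y /andP[_]]].
rewrite /= cat_uniq => /and3P[up dis uf].
have -> : Eset (p :: ps) = Eset1 p :|: Eset ps.
  apply/setP => A; rewrite in_setU /Eset /Eset1 !in_set; apply/existsP/orP.
  - case=> x /existsP[y /andP[/eqP->]]; rewrite has_cons => /orP[ad|ad].
      by left; apply/existsP; exists x; apply/existsP; exists y; rewrite eqxx ad.
    by right; apply/existsP; exists x; apply/existsP; exists y; rewrite eqxx ad.
  - case=> /existsP[x /existsP[y /andP[/eqP-> ad]]].
      by exists x; apply/existsP; exists y; rewrite eqxx has_cons ad.
    by exists x; apply/existsP; exists y; rewrite eqxx has_cons ad orbT.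
rewrite cardsU -IH // Eset1_card //.
have -> : Eset1 p :&: Eset ps = set0.
  apply/setP => A; rewrite in_setI in_set0; apply/negbTE/negP => /andP[A1].
  rewrite /Eset in_set => /existsP[x /existsP[y /andP[/eqP EA /hasP[q qin ad]]]].
  have xA : x \in A by rewrite EA set21.
  have xp := Eset1_mem A1 xA.
  move/adjp_mem: ad => /andP[xq _].
  by move/hasP: dis; apply; exists x => //; apply/flattenP; exists q.
by rewrite cards0 subn0.
Qed.

Lemma sumn_pred (l : seq nat) : all (fun n => 0 < n) l ->
  sumn (map predn l) + size l = sumn l.
Proof.
elim: l => [|a l IH] //= /andP[a0 al].
rewrite -IH //; move: a0; clear; lia.
Qed.

Lemma uniq_flatten_map (T : finType) (Bs : seq {set T}) (f : {set T} -> seq T) :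
  uniq Bs -> (forall A, A \in Bs -> uniq (f A) /\ f A =i A) ->
  {in Bs &, forall A B : {set T}, A != B -> [disjoint A & B]} -> uniq (flatten (map f Bs)).
Proof.
elim: Bs => [|a Bs IH] //= /andP[aBs uBs] H D.
rewrite cat_uniq; apply/and3P; split.
- by have [] : uniq (f a) /\ f a =i a by apply: H; rewrite inE eqxx.
- apply/hasPn => x /flattenP[q /mapP[B Bin ->] xB].
  have [_ EB] : uniq (f B) /\ f B =i B by apply: H; rewrite inE Bin orbT.
  have [_ Ea] : uniq (f a) /\ f a =i a by apply: H; rewrite inE eqxx.
  rewrite /= Ea; rewrite EB in xB.
  have aB : a != B by apply: contraNneq aBs => ->.
  have dAB : [disjoint a & B] by apply: D aB; rewrite inE ?eqxx ?Bin ?orbT.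
  by apply/negP => xa; have := disjointFr dAB xa; rewrite xB.
- apply: IH => //.
    by move=> A AB; apply: H; rewrite inE AB orbT.
  by move=> A B AB BB; apply: D; rewrite inE ?AB ?BB orbT.
Qed.

Lemma bridge (T : finType) (e : rel T) m : disjoint_union_of_paths_min m e ->
  exists ps : seq (seq T),
    [/\ Struct e ps set0, Uo ps = setT, all (fun n => m <= n) (map size ps),
        size ps + nedges e = #|T| & sumn (map size ps) = #|T|].
Proof.
move=> [_ [P [partP blk cross]]].
move/and3P: partP => [/eqP coverP trivP s0P].
pose ps := map (pathof e) (enum P).
have goodA : forall A, A \in P -> good e A (pathof e A).
  by move=> A AP; apply: pathofP; have [] := blk A AP.
have memA : forall A x, A \in P -> (x \in pathof e A) = (x \in A).
  by move=> A x AP; have /and3P[_ /forallP/(_ x)/eqP -> _] := goodA A AP.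
have xcov : forall x, x \in cover P by move=> x; rewrite coverP inE.
have memps : forall x, x \in flatten ps.
  move=> x; apply/flattenP; exists (pathof e (pblock P x)).
    by apply: map_f; rewrite mem_enum; apply: pblock_mem.
  by rewrite memA ?mem_pblock // pblock_mem.
have uniqps : uniq (flatten ps).
  apply: uniq_flatten_map; first exact: enum_uniq.
    move=> A; rewrite mem_enum => AP; have /and3P[u _ _] := goodA A AP.
    by split => // x; rewrite memA.
  move=> A B; rewrite !mem_enum => AP BP; exact: (trivIsetP trivP).
have S : Struct e ps set0.
  split; [exact: uniqps | by move=> x; rewrite inE | | | by move=> x y; rewrite inE].
  - move=> p /mapP[A]; rewrite mem_enum => AP ->.
    have /and3P[_ _ /forallP He] := goodA A AP.
    by move=> x y xp yp; have := forallP (He x) y; rewrite xp yp /= => /eqP.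
  - move=> x y _ _ exy; apply/hasP; exists (pathof e (pblock P x)).
      by apply: map_f; rewrite mem_enum; apply: pblock_mem.
    rewrite !memA ?pblock_mem // mem_pblock xcov /=.
    by rewrite (cross _ _ exy) mem_pblock.
have [u1 _ u3 u4 _] := S.
have He : forall x y, e x y = has (fun p => adjp p x y) ps.
  move=> x y; apply/idP/idP => [exy|/hasP[p pin ad]].
    have /hasP[p pin /andP[xp yp]] := u4 _ _ (memps x) (memps y) exy.
    by apply/hasP; exists p => //; rewrite -(u3 p).
  have /andP[xp yp] := adjp_mem ad.
  by rewrite (u3 p).
have pos : all (fun n => 0 < n) (map size ps).
  apply/allP => n /mapP[p /mapP[A]]; rewrite mem_enum => AP -> ->.
  rewrite (good_size (goodA A AP)) card_gt0.
  by apply: contraNneq s0P => <-.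
have sumT : sumn (map size ps) = #|T|.
  rewrite -size_flatten -(card_uniqP uniqps); apply: eq_card => x.
  by rewrite memps inE.
exists ps; split => //.
- by apply/setP => x; rewrite !inE memps.
- apply/allP => n /mapP[p /mapP[A]]; rewrite mem_enum => AP -> ->.
  by rewrite (good_size (goodA A AP)); have [] := blk A AP.
- have -> : nedges e = #|Eset ps|.
    apply: eq_card => A; rewrite !inE.
    apply: eq_existsb => x; apply: eq_existsb => y.
    by rewrite He.
  rewrite Eset_card // -sumT -(sumn_pred pos) size_map addnC.
  by rewrite (map_comp predn size).
Qed.

Lemma exfun (T T' : finType) : #|T| = #|T'| -> exists f : T -> T', True.
Proof.
move=> E; case: (pickP (@predT T')) => [y _|none]; first by exists (fun _ => y).
have E0 : #|T| = 0 by rewrite E; apply: eq_card0.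
have H : T -> False by move=> x; have := card0_eq E0 x; rewrite !inE.
by exists (fun x => False_rect T' (H x)).
Qed.

Lemma siso0 (T T' : finType) (e : rel T) (e' : rel T') (f : T -> T') :
  siso e set0 e' set0.
Proof.
exists f; split.
- by move=> x y; rewrite inE.
- by rewrite imset0.
- by move=> x y; rewrite inE.
Qed.

Unset Implicit Arguments.

Theorem theorem2p4 (k : nat)
  (TL : finType) (eL : rel TL) (TG : finType) (eG : rel TG)
  (TG' : finType) (eG' : rel TG') :
  linear_forest eL -> #|TL| = k ->
  disjoint_union_of_paths_min (k - 1) eG ->
  disjoint_union_of_paths_min (k - 1) eG' ->
  #|TG| = #|TG'| -> nedges eG = nedges eG' ->
  s_count eG eL = s_count eG' eL.
Proof.
move=> _ Hk HG HG' HN HE.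
have [ps [S U A c s]] := bridge HG.
have [ps' [S' U' A' c' s']] := bridge HG'.
have scnt : forall (T : finType) (e : rel T) (qs : seq (seq T)), Uo qs = setT ->
    s_count e eL = cnt eL e qs set0.
  move=> T e qs Uq; rewrite /s_count /cnt Uq; apply: eq_card => X.
  by rewrite !inE subsetT setU0.
rewrite (scnt _ _ _ U) (scnt _ _ _ U').
have [f0 _] := exfun HN.
have [g0 _] := exfun (esym HN).
have kk : (#|TL| - #|@set0 TG|).-1 = k - 1 by rewrite cards0 subn0 Hk subn1.
apply: (@mainM _ eL (sumn (map size ps))) => //.
- exact: siso0 f0.
- exact: siso0 g0.
- by apply/(@addIn (nedges eG)); rewrite c HN HE c'.
- by rewrite s s'.
- by rewrite kk.
- by rewrite kk.
Qed.
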